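(* Let $x_n=2^{-n}$ for $n\in\mathbb N$, and let $(y_n)$ be a sequence of real numbers such that $\sum_n y_n$ is absolutely convergent and $y_n\neq\sum_{i>n}y_i$ for every $n\in\mathbb N$. Then every point of the achievement set $E(x_n,y_n)\subset\mathbb R^2$ has a unique representation, and $E(x_n,y_n)$ is a Cantor set.
   Context: For an absolutely convergent series $\sum_n v_n$ in $\mathbb R^d$, its achievement set is $E(v)=\{\sum_{n=1}^\infty \varepsilon_n v_n : (\varepsilon_n)\in\{0,1\}^{\mathbb N}\}$; $E(x_n,y_n)$ denotes the achievement set of $((x_n,y_n))_n$ in $\mathbb R^2$. A point $a$ has a unique representation if there is exactly one set $A\subset\mathbb N$ with $a=\sum_{i\in A}(x_i,y_i)$. A Cantor set is a nonempty, totally disconnected, perfect, compact subset of $\mathbb R^n$. *)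

(* Defs.v *)
From HB Require Import structures.
From mathcomp Require Import all_boot all_order all_algebra.
From mathcomp Require Import all_classical all_reals all_analysis.
Set Implicit Arguments. Unset Strict Implicit. Unset Printing Implicit Defensive.
Import Order.TTheory GRing.Theory Num.Theory.
Import numFieldNormedType.Exports.
Local Open Scope classical_set_scope.
Local Open Scope ring_scope.

Definition subsum {R : realType} (u : nat -> R) (A : set nat) : R :=
  limn (fun n => \sum_(0 <= i < n | i \in A) u i).

Definition tailsum {R : realType} (u : nat -> R) (m : nat) : R :=
  limn (fun n => \sum_(m.+1 <= i < n) u i).

Definition subsum2 {R : realType} (x y : nat -> R) (A : set nat) : R * R :=
  (subsum x A, subsum y A).

Definition achievement_set2 {R : realType} (x y : nat -> R) : set (R * R) :=
  range (subsum2 x y).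

Definition unique_representation {R : realType} (x y : nat -> R) (a : R * R) : Prop :=
  exists! A : set nat, a = subsum2 x y A.

Definition cantor_set {T : topologicalType} (C : set T) : Prop :=
  [/\ C !=set0, totally_disconnected C, perfect_set C & compact C].

(* Main.v *)
Require Import Defs.
From HB Require Import structures.
From mathcomp Require Import all_boot all_order all_algebra.
From mathcomp Require Import all_classical all_reals all_analysis.
Import Order.TTheory GRing.Theory Num.Theory.
Import numFieldNormedType.Exports.
Local Open Scope classical_set_scope.
Local Open Scope ring_scope.
Set Implicit Arguments. Unset Strict Implicit. Unset Printing Implicit Defensive.
Section S.
Variable R : realType.
Implicit Types u v w : nat -> R.

Definition abss u := cvgn (series (fun n => `|u n|)).
Definition L u := limn (series u).
Definition M u (P : nat -> bool) : nat -> R := fun i => if P i then u i else 0.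

Lemma abss_cvg u : abss u -> cvgn (series u).
Proof. by move=> h; apply: normed_cvg. Qed.

Lemma abss_le u v : (forall n, `|v n| <= `|u n|) -> abss u -> abss v.
Proof.
move=> h hu; apply: (@series_le_cvg _ _ (fun n => `|u n|)) => //.
Qed.

Lemma abssD u v : abss u -> abss v -> abss (u + v).
Proof.
move=> hu hv; apply: (@series_le_cvg _ _ (fun n => `|u n| + `|v n|)) => //.
- by move=> n; exact: ler_normD.
- exact: (is_cvg_seriesD hu hv).
Qed.

Lemma abssN u : abss u -> abss (- u).
Proof. by apply: abss_le => n; rewrite /= normrN. Qed.

Lemma abssB u v : abss u -> abss v -> abss (u - v).
Proof. by move=> hu hv; apply: abssD => //; apply: abssN. Qed.

Lemma abssM u P : abss u -> abss (M u P).
Proof. by apply: abss_le => n; rewrite /M; case: (P n) => //; rewrite normr0. Qed.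

Lemma LB u v : abss u -> abss v -> L (u - v) = L u - L v.
Proof. by move=> hu hv; apply: lim_seriesB; apply: abss_cvg. Qed.

Lemma L_le u v : abss u -> abss v -> (forall n, u n <= v n) -> L u <= L v.
Proof. by move=> hu hv h; apply: lim_series_le => //; apply: abss_cvg. Qed.

Lemma series_le_L u : abss u -> (forall n, 0 <= u n) -> forall n, series u n <= L u.
Proof.
move=> hu h n; apply: nondecreasing_cvgn_le; last exact: abss_cvg.
move=> a b ab; rewrite /series /=.
exact: (@nondecreasing_series R u xpredT 0%N) => //.
Qed.

Lemma L_zero u : abss u -> (forall n, 0 <= u n) -> L u = 0 -> forall n, u n = 0.
Proof.
move=> hu h L0 n; apply/eqP; rewrite eq_le h andbT.
have := series_le_L hu h n.+1; rewrite L0 /series /= big_nat_recr //=.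
move=> H; apply: le_trans H; rewrite lerDr; apply: sumr_ge0 => i _; exact: h.
Qed.

Lemma L_abs u : abss u -> `|L u| <= L (fun n => `|u n|).
Proof. by move=> hu; apply: lim_series_norm. Qed.

Lemma sum_tail w N m : \sum_(0 <= i < m) M w (fun i => (N <= i)%N) i = \sum_(N <= i < m) w i.
Proof.
elim: m => [|m IH]; first by rewrite !big_geq.
rewrite big_nat_recr //= IH /M.
case: (leqP N m) => h; first by rewrite big_nat_recr.
by rewrite !big_geq ?addr0 // ltnW.
Qed.

Lemma L_delta u n : L (M u (fun i => i == n)) = u n.
Proof.
rewrite /L; apply: (@lim_near_cst _ (@Rhausdorff R)); near=> m.
rewrite /series /= /M -big_mkcond /= big_nat1_eq /=.
suff -> : (n < m)%N by [].
by near: m; exists n.+1.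
Unshelve. all: end_near. Qed.

End S.
From mathcomp.algebra_tactics Require Import ring lra.
Section X.
Variable R : realType.

Lemma geo_sum (n m : nat) : (n <= m)%N ->
  \sum_(n <= i < m) (2:R)^- i.+1 = 2^-n - 2^-m.
Proof.
elim: m => [|m IH]; first by rewrite leqn0 => /eqP ->; rewrite big_geq // subrr.
rewrite leq_eqVlt => /orP[/eqP <-|]; first by rewrite big_geq // subrr.
rewrite ltnS => h; rewrite big_nat_recr //= IH //.
have e : (2:R)^- m = 2 * 2^- m.+1 by rewrite exprS invfM mulrA divff // mul1r.
rewrite e; ring.
Qed.

Lemma geo_tail (n : nat) :
  limn (fun m => \sum_(n.+1 <= i < m) (2:R)^- i.+1) = 2^- n.+1.
Proof.
apply: cvg_lim; first exact: Rhausdorff.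
have h0 : (fun m => (2:R)^- m) @ \oo --> 0.
  have := @cvg_expr R 2^-1; rewrite ger0_norm ?invr_ge0 // invf_lt1 ?ltr1n //.
  move=> /(_ isT); apply: cvg_trans; apply: near_eq_cvg; near=> m.
  by rewrite exprVn.
have : (fun m => (2:R)^- n.+1 - 2^- m) @ \oo --> (2:R)^- n.+1 - 0.
  by apply: cvgB => //; exact: cvg_cst.
rewrite subr0; apply: cvg_trans; apply: near_eq_cvg; near=> m.
rewrite geo_sum //; near: m; by exists n.+1.
Unshelve. all: end_near. Qed.

End X.
Section K.
Variable R : realType.

Lemma L_tail (w : nat -> R) N : L (M w (fun i => (N <= i)%N)) = limn (fun m => \sum_(N <= i < m) w i).
Proof. rewrite /L; suff -> : series (M w (fun i => (N <= i)%N)) = (fun m => \sum_(N <= i < m) w i) by []. by apply: funext => m; exact: sum_tail. Qed.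

Lemma abss_x : abss (fun i => (2:R)^- i.+1).
Proof.
rewrite /abss; have -> : (fun n => `|(2:R)^- n.+1|) = geometric 2^-1 2^-1.
  apply: funext => n /=; rewrite ger0_norm ?invr_ge0 ?exprn_ge0 //.
  by rewrite exprSr invfM mulrC exprVn.
by apply: (@is_cvg_geometric_series R); rewrite ger0_norm ?invr_ge0 // invf_lt1 ?ltr1n.
Qed.

Lemma key (y : nat -> R) (P Q : nat -> bool) n : abss y ->
  (forall i, (i < n)%N -> P i = Q i) -> P n = true -> Q n = false ->
  L (M (fun i => (2:R)^- i.+1) P) = L (M (fun i => (2:R)^- i.+1) Q) ->
  L (M y P) - L (M y Q) = y n - tailsum y n.
Proof.
set x := (fun i => (2:R)^- i.+1) => hy hlt hPn hQn hL.
have ax := abss_x.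
have xpos : forall i, 0 < x i by move=> i; rewrite /x invr_gt0 exprn_gt0.
pose d := M x P - M x Q.
pose e := M x (fun i => i == n) - M x (fun i => (n.+1 <= i)%N).
have aM : forall P, abss (M x P) by move=> P'; exact: abssM.
have ad : abss d by apply: abssB; apply: abssM.
have ae : abss e by apply: abssB; apply: abssM.
have Le : L e = 0.
  rewrite /e LB ?abssM //. rewrite (L_delta x n) L_tail.
  by rewrite (_ : limn _ = x n) ?subrr //; exact: geo_tail.
have Ld : L d = 0 by rewrite /d LB // hL subrr.
have gpos : forall i, 0 <= (d - e) i.
  move=> i; rewrite (_ : (d - e) i = (M x P i - M x Q i) - (M x (fun j => j == n) i - M x (fun j => (n.+1 <= j)%N) i)) //.
  rewrite /M subr_ge0.
  case: (ltngtP i n) => [h|h|->].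
  - by rewrite hlt // !subrr.
  - by have := xpos i; case: (P i); case: (Q i) => /= xi; lra.
  - by rewrite hPn hQn /=; lra.
have g0 := L_zero (abssB ad ae) gpos (ltac:(by rewrite LB // Ld Le subrr)).
have hPQ : forall i, (n < i)%N -> P i = false /\ Q i = true.
  move=> i hi; have := g0 i.
  rewrite (_ : (d - e) i = (M x P i - M x Q i) - (M x (fun j => j == n) i - M x (fun j => (n.+1 <= j)%N) i)) //.
  rewrite /M (gtn_eqF hi) hi.
  by have := xpos i; case: (P i); case: (Q i) => //= xi; lra.
have aMy : forall P, abss (M y P) by move=> P'; exact: abssM.
rewrite -LB //.
have -> : M y P - M y Q = M y (fun i => i == n) - M y (fun i => (n.+1 <= i)%N).
  apply: funext => i.
  rewrite (_ : (M y P - M y Q) i = M y P i - M y Q i) //.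
  rewrite (_ : (_ - _) i = M y (fun j => j == n) i - M y (fun j => (n.+1<=j)%N) i) // /M.
  case: (ltngtP i n) => [h|h|->].
  - by rewrite hlt // !subrr.
  - by case: (hPQ i h) => -> ->.
  - by rewrite hPn hQn.
by rewrite LB // (L_delta y n) L_tail.
Qed.

End K.
Section C.
Variable R : realType.

Lemma prefix_near (b : cantor_space) (n : nat) :
  \forall c \near b, forall i,  (i < n)%N -> b i = c i.
Proof.
elim: n => [|n IH]; first by near=> z => ?; rewrite ltn0.
near=> z => i; rewrite leq_eqVlt => /predU1P[|iSn]; last by rewrite (near IH z).
move=> [->]; near: z; exists (proj n @^-1` [set b n]).
split => //; suff : @open cantor_space (proj n @^-1` [set b n]) by [].
apply: open_comp; [move=> + _; exact: proj_continuous| apply: discrete_open].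
Unshelve. all: end_near. Qed.

Lemma tail_lim (w : nat -> R) N : abss w ->
  limn (fun m => \sum_(N <= i < m) w i) = L w - series w N.
Proof.
move=> hw; apply: cvg_lim; first exact: Rhausdorff.
have : (fun m => series w m - series w N) @ \oo --> L w - series w N.
  apply: cvgB; last exact: cvg_cst.
  exact: (abss_cvg hw).
apply: cvg_trans; apply: near_eq_cvg; near=> m.
by rewrite sub_series_geq //; near: m; exists N.
Unshelve. all: end_near. Qed.

Lemma tail_small (u : nat -> R) : abss u -> forall eps, 0 < eps ->
  exists N, L (M (fun i => `|u i|) (fun i => (N <= i)%N)) < eps.
Proof.
move=> hu eps e0.
have hw : abss (fun i => `|u i|) by apply: (abss_le _ hu) => n /=; rewrite normr_id.
have cw := abss_cvg hw.
have := (cvgrPdist_lt (series (fun i => `|u i|)) (L (fun i => `|u i|))).1 cw eps e0.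
move=> [N _ hN]; exists N; rewrite L_tail tail_lim //.
have := hN N (leqnn N); rewrite /=.
by move/(le_lt_trans (ler_norm _)).
Qed.

Lemma G_cont (u : nat -> R) : abss u ->
  continuous (fun b : cantor_space => L (M u b)).
Proof.
move=> hu b; apply/cvgrPdist_lt => eps e0.
have [N hN] := tail_small hu e0.
near=> c.
have hpre : forall i, (i < N)%N -> b i = c i by near: c; exact: prefix_near.
have aM : forall P, abss (M u P) by move=> P; exact: abssM.
rewrite -LB //.
apply: le_lt_trans (L_abs (abssB (aM _) (aM _))) _.
apply: le_lt_trans hN.
apply: L_le.
- by apply: (abss_le _ (abssB (aM b) (aM c))) => n /=; rewrite normr_id.
- by apply: abssM; apply: (abss_le _ hu) => n /=; rewrite normr_id.
move=> i; rewrite (_ : (M u b - M u c) i = M u b i - M u c i) // /M /=.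
case: (ltnP i N) => h.
  by rewrite (hpre i h); case: (c i); rewrite subrr normr0.
by case: (b i); case: (c i); rewrite ?subrr ?normr0 ?subr0 ?sub0r ?normrN ?normr_ge0 ?lexx.
Unshelve. all: end_near. Qed.

End C.
Lemma setb (b : nat -> bool) : (fun i => i \in [set j | b j]) = b.
Proof. apply: funext => i; apply/idP/idP => [/set_mem //|h]; exact: mem_set. Qed.
Lemma seteqb (A B : set nat) : (fun i => i \in A) = (fun i => i \in B) -> A = B.
Proof. move=> h; apply/seteqP; split => i hi.
  by apply: set_mem; rewrite -(congr1 (fun f => f i) h); exact: mem_set.
by apply: set_mem; rewrite (congr1 (fun f => f i) h); exact: mem_set. Qed.
Lemma hR (R : realType) : hausdorff_space (R * R)%type.
Proof.
move=> [p1 p2] [q1 q2] cl.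
have e1 : p1 = q1.
  apply: Rhausdorff => A B hA hB.
  have [[z1 z2] [/= za zb]] := cl (fun z => A z.1) (fun z => B z.1)
    (ltac:(exists (A, setT); first (split => //; exact: filterT); by move=> [? ?] [])) 
    (ltac:(exists (B, setT); first (split => //; exact: filterT); by move=> [? ?] [])).
  by exists z1.
have e2 : p2 = q2.
  apply: Rhausdorff => A B hA hB.
  have [[z1 z2] [/= za zb]] := cl (fun z => A z.2) (fun z => B z.2)
    (ltac:(exists (setT, A); first (split => //; exact: filterT); by move=> [? ?] [])) 
    (ltac:(exists (setT, B); first (split => //; exact: filterT); by move=> [? ?] [])).
  by exists z2.
by rewrite e1 e2.
Qed.
Section Main.
Variable R : realType.

Lemma injL (y : nat -> R) (P Q : nat -> bool) : abss y ->
  (forall n, y n != tailsum y n) ->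
  L (M (fun i => (2:R)^- i.+1) P) = L (M (fun i => (2:R)^- i.+1) Q) ->
  L (M y P) = L (M y Q) -> P = Q.
Proof.
move=> hy hne hx hyq.
case: (pselect (exists n, P n != Q n)) => [ex|nex]; last first.
  apply: funext => i; apply/eqP; apply/negP => /negP hi; apply: nex; by exists i.
case: (ex_minnP ex) => n hn hmin.
have hlt : forall i, (i < n)%N -> P i = Q i.
  move=> i hi; apply/eqP; apply/negP => /negP hne'.
  by have := hmin i hne'; rewrite leqNgt hi.
exfalso; move/negP: (hne n); apply; rewrite -subr_eq0.
case hPn : (P n); move: hn; rewrite hPn; case hQn : (Q n) => // _.
  by rewrite -(key hy hlt hPn hQn hx) hyq subrr.
have hlt' : forall i, (i < n)%N -> Q i = P i by move=> i hi; rewrite hlt.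
by rewrite -(key hy hlt' hQn hPn (esym hx)) hyq subrr.
Qed.

Lemma subsumE (u : nat -> R) A : subsum u A = L (M u (fun i => i \in A)).
Proof.
rewrite /subsum /L.
suff -> : (fun n => \sum_(0 <= i < n | i \in A) u i) = series (M u (fun i => i \in A)) by [].
by apply: funext => n; rewrite /series /= big_mkcond.
Qed.

End Main.

Unset Implicit Arguments.
Theorem mainTheorem4 (R : realType) (x y : nat -> R) :
  (forall n, x n = (2 : R) ^- n.+1) ->
  cvgn (series (fun n => `|y n|)) ->
  (forall n, y n != tailsum y n) ->
  (forall a, achievement_set2 x y a -> unique_representation x y a) /\
  cantor_set (achievement_set2 x y).
Proof.
move=> hx hy hne.
have ex : x = fun i => (2:R)^- i.+1 := funext hx.
subst x.
have hy' : abss y := hy.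
set F := fun b : cantor_space => (L (M (fun i => (2:R)^- i.+1) b), L (M y b)).
have Finj : forall b c, F b = F c -> b = c.
  move=> b c [h1 h2]; exact (@injL R y b c hy' hne h1 h2).
have FE : achievement_set2 (fun i => (2:R)^- i.+1) y = range F.
  apply/seteqP; split => a [A _ <-].
    exists (fun i => i \in A) => //.
    by rewrite /subsum2 !subsumE.
  exists [set i | A i] => //.
  by rewrite /subsum2 !subsumE setb.
split.
  move=> a [A _ <-]; exists A; split => // B.
  rewrite /subsum2 !subsumE => -[h1 h2].
  by apply: seteqb; apply: injL hy' hne h1 h2.
rewrite FE.
have Fc : continuous F.
  move=> b; have h := (cvg_pair (G_cont (@abss_x R) (x:=b)) (G_cont hy' (x:=b))). apply: h; exact: nbhs_filter.
have cE : compact (range F).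
  exact: (continuous_compact (continuous_subspaceT Fc) cantor_space_compact).
have clE : closed (range F) := compact_closed (@hR R) cE.
have imgc : forall U : set cantor_space, closed U -> closed (F @` U).
  move=> U cU; apply: (compact_closed (@hR R)).
  apply: (continuous_compact (continuous_subspaceT Fc)).
  exact: (subclosed_compact cU cantor_space_compact).
split.
- by exists (F (fun=> false)); exists (fun=> false).
- move=> p [b _ <-]; apply/seteqP; split; last first.
    move=> q ->; exists [set F b] => //; split => //; last exact: connected1.
    by move=> z ->; exists b.
  move=> q [C [CFb CE cC] Cq].
  have [c _ qc] := CE q Cq; subst q.
  case: (pselect (c = b)) => [->//|ncb]; exfalso.
  have ncb' : b != c by apply/eqP => e; apply: ncb; rewrite e.
  have [U [[oU cU] Ub nUc]] := cantor_zero_dimensional ncb'.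
  have cV := imgc U cU; have cW := imgc _ (open_closedC oU).
  have key : C `&` (F @` U) = C.
    apply: cC.
    - by exists (F b); split => //; exists b.
    - exists (~` (F @` (~` U))); first exact: closed_openC cW.
      apply/seteqP; split => z [Cz Vz]; split => //.
      + move=> [d nUd edz]; case: Vz => d' Ud' ed'z.
        by have e := Finj _ _ (etrans edz (esym ed'z)); apply: nUd; rewrite e.
      + have [d _ dz] := CE z Cz; exists d => //.
        by apply: contrapT => nUd; apply: Vz; exists d.
    - by exists (F @` U).
  have : (C `&` (F @` U)) (F c) by rewrite key.
  by move=> [_ [d Ud edc]]; apply: nUc; rewrite -(Finj _ _ edc).
- split => //; apply/seteqP; split.
    by move=> p /subset_limit_point; rewrite -(closure_id _).1.
  move=> p [b _ <-] U hU.
  have hb : nbhs b (F @^-1` U) := Fc b U hU.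
  have [_ lp] := cantor_perfect.
  have : limit_point [set: cantor_space] b by rewrite lp.
  move=> /(_ _ hb) [c [ncb _ Uc]]; exists (F c); split.
  + by apply/eqP => /Finj e; move/eqP: ncb; apply.
  + by exists c.
  + exact: Uc.
- exact: cE.
Qed.
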